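(* Let $X$ be a compact nonpositively curved cube complex and $(\tilde Y,\phi)$ a quasiline in $\tilde X$. Then: (1) there is a constant $D$ such that $\operatorname{diam}(H)\le D$ for every hyperplane $H$ of $\tilde Y$ that is not trivial; (2) there is a constant $K$ such that for every half-essential hyperplane $H$ of $\tilde Y$, its shallow halfspace $H^\epsilon$ satisfies $\operatorname{diam}(H^\epsilon)\le K$; (3) there is an integer $d$ such that for every essential hyperplane $H$ of $\tilde Y$, the hyperplanes $H$ and $\phi^d(H)$ do not intersect, and every hyperplane of $\tilde Y$ crossing both of them is trivial; (4) $\tilde Y$ has only finitely many trivial hyperplanes. The constants $K,D,d$ depend only on $(\tilde Y,\phi)$. Moreover, any constants $\overline D\ge D$, $\overline K\ge K$ and any integer $\overline d\ge d$ also satisfy (1), (2), (3) respectively.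
   Context: $\tilde X$ is the universal cover of $X$. A quasiline in $\tilde X$ is a pair $(\tilde Y,\phi)$ with $\tilde Y\subset\tilde X$ a convex subcomplex and $\phi\in\pi_1X$ nontrivial such that $\langle\phi\rangle$ acts cocompactly on $\tilde Y$. Hyperplanes of $\tilde Y$ and their halfspaces are taken in the CAT(0) cube complex $\tilde Y$. A halfspace of $H$ is deep if it contains points arbitrarily far from $H$, shallow otherwise. $H$ is essential if both halfspaces are deep, trivial if both are shallow, half-essential if exactly one is deep. *)

(* Defs.v *)
(* (boot only) + Stdlib relation closures.
   A CAT(0) cube complex is encoded by its 1-skeleton, a median graph
   (vertex type V, adjacency relation adj). *)
From mathcomp Require Import all_boot.
From Stdlib Require Import Relation_Operators.
From Stdlib Require List.
Set Implicit Arguments. Unset Strict Implicit. Unset Printing Implicit Defensive.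

(* within adj Y n x y : there is an edge path of length <= n from x to y
   all of whose vertices after x lie in Y  (i.e. d_Y(x,y) <= n). *)
Fixpoint within (V : Type) (adj : V -> V -> Prop) (Y : V -> Prop)
    (n : nat) (x y : V) : Prop :=
  match n with
  | 0 => x = y
  | n'.+1 => x = y \/ exists z, Y z /\ adj x z /\ within adj Y n' z y
  end.

Definition allV (V : Type) : V -> Prop := fun _ => True.

Definition is_dist (V : Type) (adj : V -> V -> Prop) (x y : V) (n : nat) :=
  within adj (@allV V) n x y /\ forall m, within adj (@allV V) m x y -> n <= m.

Definition in_interval (V : Type) (adj : V -> V -> Prop) (x y m : V) :=
  exists a b c, [/\ is_dist adj x m a, is_dist adj m y b, is_dist adj x y c
                 & a + b = c].

Definition median_graph (V : Type) (adj : V -> V -> Prop) : Prop :=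
  [/\ (forall x y, adj x y -> adj y x),
      (forall x, ~ adj x x),
      (forall x y, exists n, within adj (@allV V) n x y)
    & (forall x y z, exists m,
         [/\ in_interval adj x y m, in_interval adj y z m, in_interval adj x z m
           & forall m', in_interval adj x y m' -> in_interval adj y z m' ->
                        in_interval adj x z m' -> m' = m])].

Definition locally_finite (V : Type) (adj : V -> V -> Prop) : Prop :=
  forall x, exists s : list V, forall y, adj x y -> List.In y s.

Definition graph_aut (V : Type) (adj : V -> V -> Prop) (g : V -> V) : Prop :=
  bijective g /\ forall x y, adj x y <-> adj (g x) (g y).

Definition is_cube (V : Type) (adj : V -> V -> Prop) (k : nat)
    (f : {ffun 'I_k -> bool} -> V) : Prop :=
  injective f /\
  forall a b, adj (f a) (f b) <-> #|[pred i | a i != b i]| = 1.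

Definition cube_stable (V : Type) (g : V -> V) (k : nat)
    (f : {ffun 'I_k -> bool} -> V) : Prop :=
  forall a, exists b, g (f a) = f b.

(* Gamma : the deck group pi_1 X, acting (faithfully) on the universal
   cover by cubical automorphisms, freely (no nontrivial element stabilises
   a cube, i.e. fixes a point) and cocompactly (X compact). *)
Definition deck_group (V : Type) (adj : V -> V -> Prop)
    (Gamma : (V -> V) -> Prop) : Prop :=
  [/\ (forall g, Gamma g -> graph_aut adj g) /\ Gamma id,
      (forall g h, Gamma g -> Gamma h -> Gamma (g \o h)),
      (forall g, Gamma g -> exists h, [/\ Gamma h, cancel g h & cancel h g]),
      (forall g, Gamma g -> (exists x, g x <> x) ->
         forall k (f : {ffun 'I_k -> bool} -> V), is_cube adj f -> ~ cube_stable g f)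
    & (exists s : list V, forall x, exists g v,
         [/\ Gamma g, List.In v s & g v = x])].

(* convex subcomplex = geodesically convex vertex set *)
Definition convex_sub (V : Type) (adj : V -> V -> Prop) (Y : V -> Prop) :=
  forall x y m, Y x -> Y y -> in_interval adj x y m -> Y m.

(* (Y, phi) is a quasiline: Y convex, phi in pi_1 X nontrivial,
   <phi> acts on Y, cocompactly (finitely many <phi>-orbits of vertices) *)
Definition quasiline (V : Type) (adj : V -> V -> Prop)
    (Gamma : (V -> V) -> Prop) (Y : V -> Prop) (phi : V -> V) : Prop :=
  [/\ convex_sub adj Y, Gamma phi, (exists x, phi x <> x),
      (forall y, Y y -> Y (phi y)) /\
      (forall y, Y y -> exists y', Y y' /\ phi y' = y)
    & (exists s : list V, (forall v, List.In v s -> Y v) /\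
         forall y, Y y -> exists v n,
           List.In v s /\ (iter n phi v = y \/ iter n phi y = v))].

Definition edge (V : Type) (adj : V -> V -> Prop) (Y : V -> Prop) (e : V * V) :=
  [/\ Y e.1, Y e.2 & adj e.1 e.2].

Definition swap (V : Type) (e : V * V) : V * V := (e.2, e.1).
Definition orient (V : Type) (b : bool) (e : V * V) : V * V :=
  if b then e else swap e.
Definition map_edge (V : Type) (g : V -> V) (e : V * V) : V * V :=
  (g e.1, g e.2).

(* elementary parallelism: reversal, or opposite sides of a square of Y *)
Definition hstep (V : Type) (adj : V -> V -> Prop) (Y : V -> Prop)
    (e e' : V * V) : Prop :=
  [/\ edge adj Y e, edge adj Y e' &
      (e' = swap e \/
       [/\ adj e.1 e'.1, adj e.2 e'.2, e.1 <> e'.2 & e.2 <> e'.1])].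

(* e and e' are dual to the same hyperplane of Y *)
Definition same_hyp (V : Type) (adj : V -> V -> Prop) (Y : V -> Prop)
    (e e' : V * V) : Prop :=
  clos_refl_sym_trans _ (hstep adj Y) e e'.

Definition hs_step (V : Type) (adj : V -> V -> Prop) (Y : V -> Prop)
    (e : V * V) (a b : V) : Prop :=
  [/\ Y a, Y b, adj a b & ~ same_hyp adj Y e (a, b)].

(* the halfspace of the hyperplane of e containing e.1: the component of
   Y minus the hyperplane containing e.1 (vertices of it) *)
Definition halfspace (V : Type) (adj : V -> V -> Prop) (Y : V -> Prop)
    (e : V * V) (x : V) : Prop :=
  Y x /\ clos_refl_trans _ (hs_step adj Y e) e.1 x.

Definition carrier (V : Type) (adj : V -> V -> Prop) (Y : V -> Prop)
    (e : V * V) (x : V) : Prop :=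
  exists e', [/\ edge adj Y e', same_hyp adj Y e e' & (x = e'.1 \/ x = e'.2)].

(* the halfspace containing e.1 is deep *)
Definition deep (V : Type) (adj : V -> V -> Prop) (Y : V -> Prop)
    (e : V * V) : Prop :=
  forall n, exists x, halfspace adj Y e x /\
    forall c, carrier adj Y e c -> ~ within adj Y n x c.

Definition essential (V : Type) (adj : V -> V -> Prop) (Y : V -> Prop) e :=
  deep adj Y e /\ deep adj Y (swap e).
Definition trivial_hyp (V : Type) (adj : V -> V -> Prop) (Y : V -> Prop) e :=
  ~ deep adj Y e /\ ~ deep adj Y (swap e).
Definition half_essential (V : Type) (adj : V -> V -> Prop) (Y : V -> Prop) e :=
  (deep adj Y e /\ ~ deep adj Y (swap e)) \/
  (~ deep adj Y e /\ deep adj Y (swap e)).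

Definition diam_le (V : Type) (adj : V -> V -> Prop) (Y : V -> Prop)
    (S : V -> Prop) (D : nat) : Prop :=
  forall x y, S x -> S y -> within adj Y D x y.

Definition crosses (V : Type) (adj : V -> V -> Prop) (Y : V -> Prop)
    (e1 e2 : V * V) : Prop :=
  forall b1 b2 : bool, exists x,
    halfspace adj Y (orient b1 e1) x /\ halfspace adj Y (orient b2 e2) x.

(* Main.v *)
From Stdlib Require Import Classical ClassicalEpsilon Relation_Operators Operators_Properties Lia.
From Stdlib Require List.
Require Import Defs.
From mathcomp Require Import all_boot zify.
Set Implicit Arguments. Unset Strict Implicit. Unset Printing Implicit Defensive.

Definition pb (P : Prop) : bool := if excluded_middle_informative P then true else false.
Lemma pbE (P : Prop) : pb P = true <-> P.
Proof. rewrite /pb; case: excluded_middle_informative => //; split => //. Qed.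

Lemma within_mono (V : Type) (adj : V -> V -> Prop) Z n x y :
  within adj Z n x y -> within adj Z n.+1 x y.
Proof.
elim: n x => [|n IH] x /=; first by move=> ->; left.
case=> [->|[z [Hz [Hxz Hw]]]]; first by left.
right; exists z; split => //; split => //; exact: IH.
Qed.

Lemma within_le (V : Type) (adj : V -> V -> Prop) Z n m x y :
  n <= m -> within adj Z n x y -> within adj Z m x y.
Proof.
move=> Hnm; have [k ->] : exists k, m = n + k by exists (m - n); lia.
elim: k => [|k IH]; rewrite ?addn0 // addnS => H; apply: within_mono; exact: IH.
Qed.

Lemma within_trans (V : Type) (adj : V -> V -> Prop) Z n m x y z :
  within adj Z n x y -> within adj Z m y z -> within adj Z (n + m) x z.
Proof.
elim: n x => [|n IH] x; first by move=> /= ->.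
move=> /= [-> H|[w [Hw [Hxw H1]]] H2].
  apply: (@within_le V adj Z m (n.+1 + m) y z); [lia|exact: H].
right; exists w; split => //; split => //; exact: IH.
Qed.

Lemma within_snoc (V : Type) (adj : V -> V -> Prop) Z n x y z :
  within adj Z n x y -> Z z -> adj y z -> within adj Z n.+1 x z.
Proof.
move=> H Hz Hyz; have -> : n.+1 = n + 1 by lia.
apply: (within_trans H); right; exists z; split => //; split => //.
Qed.

Lemma within_sub (V : Type) (adj : V -> V -> Prop) (Z Z' : V -> Prop) n x y :
  (forall v, Z v -> Z' v) -> within adj Z n x y -> within adj Z' n x y.
Proof.
move=> HZ; elim: n x => [|n IH] x //=.
case=> [->|[w [Hw [Hxw H]]]]; first by left.
right; exists w; split; first exact: HZ. split => //; exact: IH.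
Qed.

Lemma within_rev (V : Type) (adj : V -> V -> Prop) (Z : V -> Prop) n x y :
  (forall a b, adj a b -> adj b a) -> Z x ->
  within adj Z n x y -> within adj Z n y x.
Proof.
move=> Hs; elim: n x => [|n IH] x Zx /=; first by move=> ->.
case=> [->|[w [Hw [Hxw H]]]]; first by left.
apply: (within_snoc (IH _ Hw H) Zx); exact: Hs.
Qed.

Section Dist.
Variables (V : Type) (adj : V -> V -> Prop).
Hypothesis Hsym : forall x y, adj x y -> adj y x.
Hypothesis Hirr : forall x, ~ adj x x.
Hypothesis Hconn : forall x y, exists n, within adj (@allV V) n x y.
Hypothesis Hmed : forall x y z, exists m,
         [/\ in_interval adj x y m, in_interval adj y z m, in_interval adj x z m
           & forall m', in_interval adj x y m' -> in_interval adj y z m' ->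
                        in_interval adj x z m' -> m' = m].

Definition Pd x y : pred nat := fun n => pb (within adj (@allV V) n x y).
Lemma exPd x y : exists n, Pd x y n.
Proof. have [n Hn] := Hconn x y; exists n; rewrite /Pd; exact/pbE. Qed.
Definition dist x y := ex_minn (exPd x y).

Lemma dist_within x y : within adj (@allV V) (dist x y) x y.
Proof. rewrite /dist; case: ex_minnP => m Hm _; exact/pbE. Qed.
Lemma dist_min x y n : within adj (@allV V) n x y -> dist x y <= n.
Proof. rewrite /dist; case: ex_minnP => m _ Hm H; apply: Hm; exact/pbE. Qed.
Lemma dist_le x y n : dist x y <= n -> within adj (@allV V) n x y.
Proof. move=> H; apply: within_le H (dist_within x y). Qed.

Lemma is_distE x y n : is_dist adj x y n <-> n = dist x y.
Proof.
split.
  case=> H1 H2; apply/eqP; rewrite eqn_leq; apply/andP; split.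
    apply: H2; exact: dist_within.
  exact: dist_min.
move=> ->; split; [exact: dist_within | move=> m; exact: dist_min].
Qed.

Lemma intervalE x y m : in_interval adj x y m <-> dist x m + dist m y = dist x y.
Proof.
split.
  case=> a [b [c [/is_distE -> /is_distE -> /is_distE -> H]]] //.
move=> H; exists (dist x m), (dist m y), (dist x y); split => //; exact/is_distE.
Qed.

Lemma dist0 x : dist x x = 0.
Proof. apply/eqP; rewrite -leqn0; apply: dist_min; done. Qed.
Lemma dist0E x y : dist x y = 0 -> x = y.
Proof. move=> H; have := dist_within x y; rewrite H; done. Qed.
Lemma distC x y : dist x y = dist y x.
Proof.
apply/eqP; rewrite eqn_leq; apply/andP; split; apply: dist_min;
  apply: within_rev => //; exact: dist_within.
Qed.
Lemma dist_tri x y z : dist x z <= dist x y + dist y z.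
Proof. apply: dist_min; apply: within_trans; exact: dist_within. Qed.
Lemma dist_adj x y : adj x y -> dist x y = 1.
Proof.
move=> H; apply/eqP; rewrite eqn_leq; apply/andP; split.
  apply: dist_min; right; exists y; done.
case: (posnP (dist x y)) => // /dist0E E; by move: H; rewrite E => /Hirr.
Qed.
Lemma dist_step x y k : dist x y = k.+1 -> exists z, adj x z /\ dist z y = k.
Proof.
move=> H; have := dist_within x y; rewrite H /= => -[E|[z [_ [Hxz Hw]]]].
  by move: H; rewrite E dist0.
exists z; split => //; apply/eqP; rewrite eqn_leq; apply/andP; split.
  exact: dist_min.
have := dist_tri x z y; rewrite H (dist_adj Hxz); lia.
Qed.
Lemma dist1 x y : dist x y = 1 -> adj x y.
Proof. by move=> /dist_step [z [H /dist0E <-]]. Qed.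
Lemma dist_adj_le x a b : adj a b -> dist x b <= (dist x a).+1.
Proof. move=> H; have := dist_tri x a b; rewrite (dist_adj H); lia. Qed.

Lemma adj_dist x u v : adj u v -> dist x v = (dist x u).+1 \/ dist x u = (dist x v).+1.
Proof.
move=> Huv; have [m [/intervalE H1 /intervalE H2 /intervalE H3 _]] := Hmed x u v.
have := dist_adj Huv => Ed.
have : dist u m = 0 \/ dist m v = 0 by lia.
have := dist_adj (Hsym Huv) => Ed'.
case=> /dist0E E; subst m; lia.
Qed.

Lemma med x y z : exists m,
  [/\ dist x m + dist m y = dist x y, dist y m + dist m z = dist y z,
      dist x m + dist m z = dist x z &
      forall m', dist x m' + dist m' y = dist x y -> dist y m' + dist m' z = dist y z ->
                 dist x m' + dist m' z = dist x z -> m' = m].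
Proof.
have [m [/intervalE H1 /intervalE H2 /intervalE H3 H4]] := Hmed x y z.
exists m; split => // m' A B C; apply: H4; exact/intervalE.
Qed.

Variable Y : V -> Prop.
Hypothesis Hconv : convex_sub adj Y.

Lemma within_Y x y : Y x -> Y y -> within adj Y (dist x y) x y.
Proof.
move=> Yx Yy; have [k Hk] : exists k, dist x y = k by eexists.
rewrite Hk.
elim: k x Yx Hk => [|k IH] x Yx Hk; first exact: (dist0E Hk).
have [z [Hxz Hz]] := dist_step Hk.
have Yz : Y z.
  apply: (Hconv Yx Yy); apply/intervalE; rewrite Hk Hz (dist_adj Hxz); lia.
right; exists z; split => //; split => //; exact: IH.
Qed.

Lemma distY_within x y n : Y x -> Y y -> dist x y <= n -> within adj Y n x y.
Proof. move=> Yx Yy H; apply: within_le H (within_Y Yx Yy). Qed.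

Lemma withinY_dist x y n : within adj Y n x y -> dist x y <= n.
Proof. move=> H; apply: dist_min; exact: within_sub H. Qed.

Lemma cut_same u v : edge adj Y (u,v) -> forall k a b, dist a u = k -> Y a -> Y b ->
  adj a b -> dist a u < dist a v -> dist b v < dist b u -> same_hyp adj Y (u,v) (a,b).
Proof.
case=> /= Yu Yv Huv; elim=> [|k IH] a b Hk Ya Yb Hab H1 H2.
  have Eau := dist0E Hk; subst a.
  have := adj_dist b Huv; have := adj_dist u Hab; have := adj_dist v Hab.
  have := distC u b; have := distC v b; have := distC v u; have := distC u v.
  have := dist_adj Huv; rewrite dist0 => *.
  have : dist b v = 0 by lia.
  move/dist0E => ->; exact: rst_refl.
have := adj_dist a Huv; have := adj_dist b Huv; have := adj_dist u Hab;
have := adj_dist v Hab; have := distC u b; have := distC v b; have := distC u a;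
have := distC v a => D1 D2 D3 D4 D5 D6 D7 D8.
have [a' [Haa' Ha'u]] := dist_step Hk.
have Ya' : Y a'.
  apply: (Hconv Ya Yu); apply/intervalE; rewrite Hk Ha'u (dist_adj Haa'); lia.
have := adj_dist v Haa'; have := distC v a'; have := adj_dist a' Huv => D9 D10 D11.
have Hab' : a' <> b by move=> E; subst a'; lia.
have Da'b : dist a' b = 2.
  have := adj_dist a' Hab; rewrite (dist_adj (Hsym Haa')).
  case: (posnP (dist a' b)) => [/dist0E //|]; lia.
have [m [M1 M2 M3 _]] := med a' b v.
have := distC m b => D12.
have Ea'm : dist a' m = 1 by lia.
have Ebm : dist b m = 1 by lia.
have Ha'm := dist1 Ea'm; have Hbm := dist1 Ebm.
have := adj_dist u Ha'm; have := adj_dist u Hbm; have := distC u m; have := distC u a' => D13 D14 D15 D16.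
have Ym : Y m by apply: (Hconv Yb Yv); apply/intervalE; lia.
have IH' := IH a' m Ha'u Ya' Ym Ha'm ltac:(lia) ltac:(lia).
apply: rst_trans IH' _; apply: rst_step; split.
- by split.
- by split.
- right; split => //=; [exact: Hsym | exact: Hsym | move=> E; subst m; lia].
Qed.

Lemma side_keep u v a b a' : adj u v -> adj a b -> adj a a' -> a' <> b ->
  dist a u < dist a v -> dist b v < dist b u -> dist a' u < dist a' v.
Proof.
move=> Huv Hab Haa' Hne H1 H2.
have := adj_dist a Huv; have := adj_dist b Huv; have := adj_dist u Hab;
have := adj_dist v Hab; have := distC u b; have := distC v b; have := distC u a;
have := distC v a => D1 D2 D3 D4 D5 D6 D7 D8.
case: (ltnP (dist a' u) (dist a' v)) => // Hge; exfalso.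
have := adj_dist a' Huv; have := adj_dist u Haa'; have := adj_dist v Haa';
have := distC u a'; have := distC v a' => D9 D10 D11 D12 D13.
have Da'b : dist a' b = 2.
  have := adj_dist a' Hab; rewrite (dist_adj (Hsym Haa')).
  case: (posnP (dist a' b)) => [/dist0E //|]; lia.
have [m [M1 M2 M3 _]] := med a' b v.
have := distC m b => D14.
have Ea'm : dist a' m = 1 by lia.
have Ebm : dist b m = 1 by lia.
have Ha'm := dist1 Ea'm; have Hbm := dist1 Ebm.
have := adj_dist u Ha'm; have := adj_dist u Hbm; have := distC u m;
have := adj_dist m Huv => D15 D16 D17 D18.
have [m0 [_ _ _ U]] := med a' b u.
have := distC b a; have := distC a' a => D19 D20.
have E1 : a = m0.
  apply: U; rewrite ?(dist_adj (Hsym Haa')) ?(dist_adj Hab) ?(dist_adj (Hsym Hab)); lia.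
have E2 : m = m0 by apply: U; lia.
subst m0; subst m; lia.
Qed.

Definition cut (e f : V * V) :=
  dist f.1 e.1 < dist f.1 e.2 /\ dist f.2 e.2 < dist f.2 e.1.
Definition cutor e f := cut e f \/ cut e (swap f).

Lemma hstep_cutor e f g : adj e.1 e.2 -> hstep adj Y f g -> cutor e f -> cutor e g.
Proof.
move=> He [[_ _ Hf] [_ _ Hg] [->|[H1 H2 H3 H4]]].
  by case: f {Hf} => a b; rewrite /cutor /swap /=; case; [right|left].
have Hs := Hsym He.
case=> [[C1 C2]|[C1 C2]]; [left|right]; split => /=.
- exact: (side_keep He Hf H1 (nesym H4)).
- exact: (side_keep Hs (Hsym Hf) H2 (nesym H3)).
- exact: (side_keep He (Hsym Hf) H2 (nesym H3)).
- exact: (side_keep Hs Hf H1 (nesym H4)).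
Qed.

Lemma hstep_sym f g : hstep adj Y f g -> hstep adj Y g f.
Proof.
case=> Ef Eg [E|[H1 H2 H3 H4]].
  by split => //; left; rewrite E; case: (f).
split => //; right; split; [exact: Hsym | exact: Hsym | exact: nesym | exact: nesym].
Qed.

Lemma same_cutor e f : edge adj Y e -> same_hyp adj Y e f -> cutor e f.
Proof.
move=> [Y1 Y2 He] H.
have base : cutor e e.
  left; split; rewrite dist0 ?(dist_adj He) ?(dist_adj (Hsym He)); done.
suff: forall a b, same_hyp adj Y a b -> (cutor e a <-> cutor e b).
  by move=> /(_ _ _ H) [] /(_ base).
move=> a b; elim => {a b H}.
- move=> a b Hab; split; [exact: hstep_cutor | apply: hstep_cutor => //; exact: hstep_sym].
- done.
- by move=> a b _ [].
- by move=> a b c _ [h1 h2] _ [h3 h4]; split => ?; auto.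
Qed.

Lemma hs_char e x : edge adj Y e ->
  (halfspace adj Y e x <-> Y x /\ dist x e.1 < dist x e.2).
Proof.
case: e => u v He; have [/= Yu Yv Huv] := He.
split.
  case=> Yx H0; have H := clos_rt_rtn1 _ _ _ _ H0; split => //; clear H0; elim: H {Yx} => /= [|y z [Yy Yz Hyz Hn] _ IH].
    by rewrite dist0 (dist_adj Huv).
  case: (ltnP (dist z u) (dist z v)) => // Hge; exfalso; apply: Hn.
  have := adj_dist z Huv => D.
  apply: (cut_same He (erefl _) Yy Yz Hyz IH); lia.
case=> Yx H; split => //=.
have [k Hk] : exists k, dist x u = k by eexists.
elim: k x Yx H Hk => [|k IH] x Yx H Hk.
  by rewrite (dist0E Hk); apply: rt_refl.
have [z [Hxz Hz]] := dist_step Hk.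
have Yz : Y z.
  apply: (Hconv Yx Yu); apply/intervalE; rewrite Hk Hz (dist_adj Hxz); lia.
have := dist_tri x z v; rewrite (dist_adj Hxz) => D.
apply: rt_trans (IH z Yz ltac:(lia) Hz) (rt_step _ _ _ _ _).
split => //; first exact: Hsym.
move/(same_cutor He) => [[/= C1 C2]|[/= C1 C2]]; lia.
Qed.

Lemma edge_swap e : edge adj Y e -> edge adj Y (swap e).
Proof. by case=> ? ? ?; split => //; apply: Hsym. Qed.

Lemma same_swap e : edge adj Y e -> same_hyp adj Y e (swap e).
Proof. move=> He; apply: rst_step; split => //; [exact: edge_swap | by left]. Qed.

Lemma same_hyp_sym e f : same_hyp adj Y e f -> same_hyp adj Y f e.
Proof. exact: rst_sym. Qed.

Lemma same_hyp_trans e f g : same_hyp adj Y e f -> same_hyp adj Y f g -> same_hyp adj Y e g.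
Proof. exact: rst_trans. Qed.

Lemma carrier_swap e x : edge adj Y e -> (carrier adj Y (swap e) x <-> carrier adj Y e x).
Proof.
move=> He; split; case=> e' [E1 E2 E3]; exists e'; split => //.
  exact: same_hyp_trans (same_swap He) E2.
apply: same_hyp_trans E2; apply: same_hyp_sym; exact: same_swap.
Qed.

Lemma carrierY e x : carrier adj Y e x -> Y x.
Proof. by case=> e' [[Y1 Y2 _] _ [->|->]]. Qed.

Lemma hs_sides e x : edge adj Y e -> Y x ->
  halfspace adj Y e x \/ halfspace adj Y (swap e) x.
Proof.
move=> He Yx; rewrite (hs_char _ He) (hs_char _ (edge_swap He)) /=.
case: (He) => _ _ Huv; have := adj_dist x Huv; case=> H; [left|right]; split => //; lia.
Qed.

Lemma hs_disj e x : edge adj Y e -> halfspace adj Y e x -> halfspace adj Y (swap e) x -> False.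
Proof.
move=> He; rewrite (hs_char _ He) (hs_char _ (edge_swap He)) /= => -[_ ?] [_ ?]; lia.
Qed.

Notation reach g := (clos_refl_trans _ (hs_step adj Y g)).

Lemma hs_step_sym g a b : hs_step adj Y g a b -> hs_step adj Y g b a.
Proof.
case=> Ya Yb Hab Hn; split => //; first exact: Hsym.
move=> H; apply: Hn; apply: same_hyp_trans H _.
by apply: (same_swap (e := (b, a))); split => //; apply: Hsym.
Qed.

Lemma rt_mono (R R' : V -> V -> Prop) x y : (forall a b, R a b -> R' a b) ->
  clos_refl_trans _ R x y -> clos_refl_trans _ R' x y.
Proof.
move=> HR; elim => [a b /HR|a|a b c _ h1 _ h2]; [exact: rt_step|exact: rt_refl|exact: rt_trans h1 h2].
Qed.

Lemma rt_sym g x y : reach g x y -> reach g y x.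
Proof.
elim => [a b /hs_step_sym|a|a b c _ h1 _ h2]; [exact: rt_step|exact: rt_refl|exact: rt_trans h2 h1].
Qed.

Lemma hs_step_swap g a b : edge adj Y g -> (hs_step adj Y (swap g) a b <-> hs_step adj Y g a b).
Proof.
move=> Hg; split; case=> Ya Yb Hab Hn; split => // H; apply: Hn.
  exact: same_hyp_trans (same_hyp_sym (same_swap Hg)) H.
exact: same_hyp_trans (same_swap Hg) H.
Qed.

Lemma rt_swap g x y : edge adj Y g -> (reach (swap g) x y <-> reach g x y).
Proof.
move=> Hg; split; apply: rt_mono => a b; rewrite (hs_step_swap _ _ Hg) //.
Qed.

Lemma rt_Y g x y : reach g x y -> Y x -> Y y.
Proof. elim => [a b []|a|a b c _ h1 _ h2] //; auto. Qed.

Lemma hs_reach g x y : halfspace adj Y g x -> reach g x y -> halfspace adj Y g y.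
Proof.
case=> Yx Hx H; split; first exact: rt_Y H Yx.
exact: rt_trans Hx H.
Qed.

Lemma hs_reach_back g x y : halfspace adj Y g y -> reach g x y -> Y x -> halfspace adj Y g x.
Proof.
case=> Yy Hy H Yx; split => //; exact: rt_trans Hy (rt_sym H).
Qed.

Lemma cross_meet e f : edge adj Y e -> edge adj Y f -> crosses adj Y e f ->
  exists p, carrier adj Y e p /\ carrier adj Y f p.
Proof.
move=> He Hf Hc; apply: NNPP => Hn.
have Hd : forall p, carrier adj Y e p -> carrier adj Y f p -> False.
  by move=> p C1 C2; apply: Hn; exists p.
have step_e : forall a b, carrier adj Y e a -> Y b -> adj a b -> hs_step adj Y f a b.
  move=> a b Ca Yb Hab; split => //; first exact: carrierY Ca.
  move=> H; apply: (Hd a Ca); exists (a, b); split => //; last by left.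
  by split => //; exact: carrierY Ca.
have R1 : forall z, carrier adj Y e z -> reach f e.1 z.
  move=> z [e' [Ee' Se' Hz]].
  suff: edge adj Y e' /\ same_hyp adj Y e e' /\ reach f e.1 e'.1 /\ reach f e.1 e'.2.
    by case=> _ [_ [h1 h2]]; case: Hz => ->.
  have Rn := clos_rst_rstn1 _ _ _ _ Se'; elim: Rn {Se' Hz Ee'}.
    split => //; split; first exact: rst_refl.
    case: (He) => _ Y2 H12; split; first exact: rt_refl.
    apply: rt_step; apply: step_e => //; exists e; split => //; [exact: rst_refl | by left].
  move=> g g' Hgg' _ [Eg [Sg [R1 R2]]].
  have H : hstep adj Y g g' by case: Hgg' => // /hstep_sym.
  have Sg' : same_hyp adj Y e g' by apply: same_hyp_trans Sg (rst_step _ _ _ _ H).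
  case: (H) => _ Eg' Hsq; split => //; split => //.
  have Cg1 : carrier adj Y e g.1 by exists g; split => //; left.
  have Cg2 : carrier adj Y e g.2 by exists g; split => //; right.
  case: Hsq => [->|[H1 H2 _ _]]; first by split.
  case: Eg' => Y1 Y2 _.
  split; [apply: rt_trans R1 (rt_step _ _ _ _ _) | apply: rt_trans R2 (rt_step _ _ _ _ _)];
    exact: step_e.
have [b Hb] : exists b, forall z, halfspace adj Y (orient b f) z -> ~ carrier adj Y e z.
  case: (classic (exists z, halfspace adj Y f z /\ carrier adj Y e z)) => [[z [Hz Cz]]|Hno].
    exists false => z' /= Hz' Cz'.
    have h1 : halfspace adj Y f e.1.
      apply: hs_reach_back Hz (R1 _ Cz) _; by case: He.
    have h2 : halfspace adj Y (swap f) e.1.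
      apply: hs_reach_back Hz' _ _; last by case: He.
      rewrite rt_swap //; exact: R1.
    exact: hs_disj Hf h1 h2.
  by exists true => z /= Hz Cz; apply: Hno; exists z.
set F := orient b f.
have HF : edge adj Y F by rewrite /F; case: (b) => /=; [done | exact: edge_swap].
have R2 : forall w, halfspace adj Y F w -> reach e F.1 w.
  move=> w [Yw Hw]; have Hn1 := clos_rt_rtn1 _ _ _ _ Hw.
  elim: Hn1 {Yw Hw} => [|y z Hyz Hr IH]; first exact: rt_refl.
  apply: rt_trans IH (rt_step _ _ _ _ _).
  have Hy : halfspace adj Y F y.
    split; last exact: clos_rtn1_rt.
    apply: rt_Y (clos_rtn1_rt _ _ _ _ Hr) _; by case: HF.
  case: Hyz => Yy Yz Hyz _; split => // Hs; apply: (Hb y Hy).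
  by exists (y, z); split => //; left.
have [x [Hx1 Hx2]] := Hc true b.
have [y [Hy1 Hy2]] := Hc false b.
have YF : Y F.1 by case: HF.
have h1 : halfspace adj Y e F.1 := hs_reach_back Hx1 (R2 _ Hx2) YF.
have h2 : halfspace adj Y (swap e) F.1.
  apply: hs_reach_back Hy1 _ YF; rewrite rt_swap //; exact: R2.
exact: hs_disj He h1 h2.
Qed.

Variables (Gamma : (V -> V) -> Prop) (phi psi : V -> V).
Hypothesis Hpp : cancel phi psi.
Hypothesis Hpp' : cancel psi phi.
Hypothesis HphiA : forall x y, adj x y <-> adj (phi x) (phi y).
Hypothesis HYphi : forall y, Y y -> Y (phi y).
Hypothesis HYpsi : forall y, Y y -> Y (psi y).

Record good (g h : V -> V) : Prop := Good {
  gh : cancel g h; hg : cancel h g;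
  gA : forall x y, adj x y -> adj (g x) (g y);
  hA : forall x y, adj x y -> adj (h x) (h y);
  gY : forall x, Y x -> Y (g x); hY : forall x, Y x -> Y (h x);
  gC : forall x, g (phi x) = phi (g x); hC : forall x, h (phi x) = phi (h x) }.

Lemma good_sym g h : good g h -> good h g.
Proof. by case=> *; split. Qed.

Lemma psiA x y : adj x y -> adj (psi x) (psi y).
Proof. by move=> H; apply/HphiA; rewrite !Hpp'. Qed.

Lemma good_phi n : good (iter n phi) (iter n psi).
Proof.
split.
- elim: n => [|n IH] x //; by rewrite iterSr iterS Hpp IH.
- elim: n => [|n IH] x //; by rewrite iterSr iterS Hpp' IH.
- elim: n => [|n IH] x y //= H; apply/(HphiA _ _).1; exact: IH.
- elim: n => [|n IH] x y //= H; apply: psiA; exact: IH.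
- elim: n => [|n IH] x //= H; apply: HYphi; exact: IH.
- elim: n => [|n IH] x //= H; apply: HYpsi; exact: IH.
- by move=> x; rewrite -iterSr iterS.
- elim: n => [|n IH] x //=; by rewrite IH Hpp Hpp'.
Qed.

Lemma good_psi n : good (iter n psi) (iter n phi).
Proof. exact: good_sym (good_phi n). Qed.

Lemma good_iterC g h n x : good g h -> g (iter n phi x) = iter n phi (g x).
Proof. by move=> Hg; elim: n => [|n IH] //=; rewrite (gC Hg) IH. Qed.

Section Transfer.
Variables (g h : V -> V).
Hypothesis Hg : good g h.

Lemma within_map n x y : within adj (@allV V) n x y -> within adj (@allV V) n (g x) (g y).
Proof.
elim: n x => [|n IH] x /=; first by move=> ->.
case=> [->|[z [_ [Hxz H]]]]; first by left.
right; exists (g z); split => //; split; [exact: (gA Hg) | exact: IH].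
Qed.

Lemma map_edgeK e : map_edge h (map_edge g e) = e.
Proof. by case: e => a b; rewrite /map_edge /= !(gh Hg). Qed.

Lemma map_orient b e : map_edge g (orient b e) = orient b (map_edge g e).
Proof. by case: b. Qed.

Lemma edge_map e : edge adj Y e -> edge adj Y (map_edge g e).
Proof. case=> *; split; [exact: (gY Hg) | exact: (gY Hg) | exact: (gA Hg)]. Qed.

Lemma hstep_map e f : hstep adj Y e f -> hstep adj Y (map_edge g e) (map_edge g f).
Proof.
case=> Ee Ef H; split; try exact: edge_map.
case: H => [->|[H1 H2 H3 H4]]; first by left.
right; split => /=; try exact: (gA Hg).
  by move=> E; apply: H3; rewrite -(gh Hg e.1) E (gh Hg).
by move=> E; apply: H4; rewrite -(gh Hg e.2) E (gh Hg).
Qed.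

Lemma same_map e f : same_hyp adj Y e f -> same_hyp adj Y (map_edge g e) (map_edge g f).
Proof.
elim => [a b /hstep_map|a|a b _ h1|a b c _ h1 _ h2].
- exact: rst_step.
- exact: rst_refl.
- exact: rst_sym.
- exact: rst_trans h1 h2.
Qed.

Lemma carrier_map e x : carrier adj Y e x -> carrier adj Y (map_edge g e) (g x).
Proof.
case=> e' [E1 E2 E3]; exists (map_edge g e'); split.
- exact: edge_map.
- exact: same_map.
- by case: E3 => ->; [left|right].
Qed.

End Transfer.

Lemma dist_map g h x y : good g h -> dist (g x) (g y) = dist x y.
Proof.
move=> Hg; apply/eqP; rewrite eqn_leq; apply/andP; split; apply: dist_min.
  apply: (within_map Hg); exact: dist_within.
rewrite -{2}[x](gh Hg) -{2}[y](gh Hg).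
apply: (within_map (good_sym Hg)); exact: dist_within.
Qed.

Lemma same_map_inv g h e f : good g h ->
  same_hyp adj Y (map_edge g e) (map_edge g f) -> same_hyp adj Y e f.
Proof.
move=> Hg /(same_map (good_sym Hg)); by rewrite !(map_edgeK Hg).
Qed.

Lemma carrier_map_inv g h e y : good g h ->
  carrier adj Y (map_edge g e) y -> carrier adj Y e (h y).
Proof. move=> Hg /(carrier_map (good_sym Hg)); by rewrite (map_edgeK Hg). Qed.

Lemma halfspace_map g h e x : good g h ->
  halfspace adj Y e x -> halfspace adj Y (map_edge g e) (g x).
Proof.
move=> Hg [Yx H]; split; first exact: (gY Hg).
suff: forall a b, reach e a b -> reach (map_edge g e) (g a) (g b) by apply.
move=> {H Yx} a0 b0; elim => [a b [Ya Yb Hab Hn]|a|a b c _ h1 _ h2].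
- apply: rt_step; split; [exact: (gY Hg) | exact: (gY Hg) | exact: (gA Hg) |].
  move=> H; apply: Hn; exact: (same_map_inv (f := (a, b)) Hg).
- exact: rt_refl.
- exact: rt_trans h1 h2.
Qed.

Lemma halfspace_map_inv g h e y : good g h ->
  halfspace adj Y (map_edge g e) y -> halfspace adj Y e (h y).
Proof. move=> Hg /(halfspace_map (good_sym Hg)); by rewrite (map_edgeK Hg). Qed.

Lemma pigL (T : Type) (L : list T) (P : nat -> Prop) (R : nat -> T -> Prop) :
  (forall n, P n -> exists y, List.In y L /\ R n y) ->
  (forall n m y, n < m -> P n -> P m -> R n y -> R m y -> False) ->
  exists M, forall n, P n -> n < M.
Proof.
elim: L P => [|a L IH] P H1 H2.
  by exists 0 => n /H1 [y []].
case: (classic (exists n0, P n0 /\ R n0 a)) => [[n0 [Pn0 Rn0]]|Hno].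
  have S1 : forall n, P n /\ n0 < n -> exists y, List.In y L /\ R n y.
    move=> n [Pn Hn]; have [y [[Ey|Iy] Ry]] := H1 n Pn; last by exists y.
    by subst y; exfalso; apply: (H2 n0 n a).
  have S2 : forall n m y, n < m -> P n /\ n0 < n -> P m /\ n0 < m -> R n y -> R m y -> False.
    by move=> n m y Hnm [Pn _] [Pm _]; apply: H2.
  have [M HM] := IH (fun n => P n /\ n0 < n) S1 S2.
  exists (maxn M n0.+1) => n Pn.
  case: (ltnP n0 n) => Hn; last by lia.
  have := HM n (conj Pn Hn); lia.
apply: IH => // n Pn; have [y [[Ey|Iy] Ry]] := H1 n Pn; last by exists y.
by subst y; exfalso; apply: Hno; exists n.
Qed.

Lemma bound_list2 (T : Type) (L : list T) (Q : T -> nat -> Prop) :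
  (forall x, exists B, forall B', B <= B' -> Q x B') ->
  exists B, forall B', B <= B' -> forall x, List.In x L -> Q x B'.
Proof.
move=> HQ; elim: L => [|a L [B HB]]; first by exists 0.
have [Ba Ha] := HQ a; exists (maxn B Ba) => B' HB' x [<-|Hx].
  apply: Ha; lia.
apply: HB => //; lia.
Qed.

Lemma bound_nat2 (T : Type) (L : list T) (M : nat) (F : nat -> T -> nat) :
  exists B, forall n x, n < M -> List.In x L -> F n x <= B.
Proof.
elim: M => [|M [B HB]]; first by exists 0.
have [B' HB'] : exists B', forall B'', B' <= B'' -> forall x, List.In x L -> F M x <= B''.
  by apply: (@bound_list2 T L (fun x B => F M x <= B)) => x; exists (F M x).
exists (maxn B B') => n x Hn Hx.
case: (ltnP n M) => Hn'.
  have := HB n x Hn' Hx; lia.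
have -> : n = M by lia.
have := HB' (maxn B B') ltac:(lia) x Hx; lia.
Qed.

Variable s : list V.
Hypothesis HsY : forall v, List.In v s -> Y v.
Hypothesis Hcoc : forall y, Y y -> exists v n, List.In v s /\ (iter n phi v = y \/ iter n phi y = v).
Hypothesis Hlf : locally_finite adj.
Hypothesis Hfree : forall k c, iter k phi c = c -> forall x, iter k phi x = x.

Lemma nbrs_list (L : list V) : exists L', forall y z, List.In y L -> adj y z -> List.In z L'.
Proof.
elim: L => [|a L [L' HL']]; first by exists nil.
have [la Ha] := Hlf a; exists (la ++ L') => y z [<-|Hy] Hyz; apply: List.in_or_app.
  by left; apply: Ha.
by right; apply: HL' Hy Hyz.
Qed.

Lemma ball x n : exists L, forall y, dist x y <= n -> List.In y L.
Proof.
elim: n => [|n [L HL]].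
  exists [:: x] => y H; left; apply: dist0E; lia.
have [L' HL'] := nbrs_list L; exists (L ++ L') => y Hy; apply: List.in_or_app.
case: (ltnP n (dist x y)) => Hn; last by left; apply: HL.
right; have : dist y x = n.+1 by rewrite distC; lia.
move/dist_step => [z [Hyz Hz]]; apply: (HL' z); last exact: Hsym.
apply: HL; rewrite distC Hz //.
Qed.

Lemma Es_ex : exists Es : list (V * V), forall v w, List.In v s -> adj v w -> List.In (v, w) Es.
Proof.
elim: s => [|a l [E HE]]; first by exists nil.
have [la Ha] := Hlf a.
exists (List.map (fun w => (a, w)) la ++ E) => v w [<-|Hv] Hvw; apply: List.in_or_app.
  by left; apply: List.in_map; apply: Ha.
by right; apply: HE.
Qed.

Definition NI e := forall k, 0 < k -> ~ same_hyp adj Y e (map_edge (iter k phi) e).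

Lemma map_iterD n m e : map_edge (iter (n + m) phi) e = map_edge (iter n phi) (map_edge (iter m phi) e).
Proof. by rewrite /map_edge !iterD. Qed.

Lemma map_comm g h k f : good g h ->
  map_edge g (map_edge (iter k phi) f) = map_edge (iter k phi) (map_edge g f).
Proof. by move=> Hg; rewrite /map_edge /= !(good_iterC _ _ Hg). Qed.

Lemma inv_transfer g h e k : good g h -> same_hyp adj Y e (map_edge (iter k phi) e) ->
  same_hyp adj Y (map_edge g e) (map_edge (iter k phi) (map_edge g e)).
Proof. move=> Hg /(same_map Hg); by rewrite (map_comm _ _ Hg). Qed.

Lemma NI_transfer g h f : good g h -> NI (map_edge g f) -> NI f.
Proof. move=> Hg H k Hk Hs; apply: (H k Hk); exact: inv_transfer Hg Hs. Qed.

Lemma orbit_NI e x n m : NI e -> n < m -> iter n phi x = iter m phi x -> False.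
Proof.
move=> HN Hnm E.
have E2 : x = iter (m - n) phi x.
  have Em : m = n + (m - n) by lia.
  move: E; rewrite [in iter m]Em iterD => /(congr1 (iter n psi)); by rewrite !(gh (good_phi n)).
have Hfx := Hfree (esym E2).
apply: (HN (m - n)); first lia.
have -> : map_edge (iter (m - n) phi) e = e by case: e {HN} => a b; rewrite /map_edge /= !Hfx.
exact: rst_refl.
Qed.

Lemma carrier_at_s (Es : list (V * V)) :
  (forall v w, List.In v s -> adj v w -> List.In (v, w) Es) ->
  forall e v, carrier adj Y e v -> List.In v s -> exists f, List.In f Es /\ same_hyp adj Y e f.
Proof.
move=> HEs e v [e' [Ee' Se' Hv]] Hs.
case: e' Ee' Se' Hv => a b /= Eab Sab [Hv|Hv]; subst v.
  by exists (a, b); split => //; apply: HEs => //; case: Eab.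
exists (b, a); split; first by apply: HEs => //; case: Eab => _ _ /Hsym.
exact: same_hyp_trans Sab (same_swap Eab).
Qed.

Lemma NI_bounded e : NI e -> exists B, forall z, carrier adj Y e z -> dist e.1 z <= B.
Proof.
move=> HN; have [Es HEs] := Es_ex.
pose P2 := fun n => exists z v, carrier adj Y e z /\ List.In v s /\ iter n phi z = v.
pose R2 := fun n f => same_hyp adj Y (map_edge (iter n phi) e) f.
have A2 : forall n, P2 n -> exists y, List.In y Es /\ R2 n y.
  move=> n [z [v [Cz [Hv E]]]]; apply: (carrier_at_s HEs) Hv.
  rewrite -E; exact: (carrier_map (good_phi n)).
have B2' : forall n m f, n < m -> P2 n -> P2 m -> R2 n f -> R2 m f -> False.
  move=> n m f Hnm _ _ S1 S2.
  have S : same_hyp adj Y (map_edge (iter n phi) e) (map_edge (iter m phi) e).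
    exact: same_hyp_trans S1 (same_hyp_sym S2).
  have Em : m = n + (m - n) by lia.
  move: S; rewrite Em map_iterD => /(same_map_inv (good_phi n)).
  apply: HN; lia.
have [M2 HM2] := pigL A2 B2'.
pose P1 := fun n => exists z v, carrier adj Y e z /\ List.In v s /\ iter n phi v = z.
pose R1 := fun n f => same_hyp adj Y e (map_edge (iter n phi) f).
have A1 : forall n, P1 n -> exists y, List.In y Es /\ R1 n y.
  move=> n [z [v [Cz [Hv E]]]].
  have : carrier adj Y (map_edge (iter n psi) e) v.
    by rewrite -(gh (good_phi n) v) E; exact: (carrier_map (good_psi n)).
  move/(carrier_at_s HEs)/(_ Hv) => [f [Hf Sf]]; exists f; split => //.
  move: (same_map (good_phi n) Sf); by rewrite (map_edgeK (good_psi n)).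
have B1' : forall n m f, n < m -> P1 n -> P1 m -> R1 n f -> R1 m f -> False.
  move=> n m f Hnm _ _ S1 S2.
  have Em : m = (m - n) + n by lia.
  apply: (HN (m - n)); first lia.
  have S2' : same_hyp adj Y e (map_edge (iter (m - n) phi) (map_edge (iter n phi) f)).
    by rewrite -map_iterD -Em; exact: S2.
  exact: same_hyp_trans S2' (same_hyp_sym (same_map (good_phi (m - n)) S1)).
have [M1 HM1] := pigL A1 B1'.
have [B1 HB1] := bound_nat2 s M1 (fun n v => dist e.1 (iter n phi v)).
have [B2 HB2] := bound_nat2 s M2 (fun n v => dist (iter n phi e.1) v).
exists (B1 + B2) => z Cz.
have [v [n [Hv [E|E]]]] := Hcoc (carrierY Cz).
  have := HB1 n v (HM1 n (ex_intro _ z (ex_intro _ v (conj Cz (conj Hv E))))) Hv.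
  rewrite /= E; lia.
have := HB2 n v (HM2 n (ex_intro _ z (ex_intro _ v (conj Cz (conj Hv E))))) Hv.
rewrite /= -E (dist_map _ _ (good_phi n)); lia.
Qed.

Lemma inv_iter e k : same_hyp adj Y e (map_edge (iter k phi) e) ->
  forall q, same_hyp adj Y e (map_edge (iter (q * k) phi) e).
Proof.
move=> H; elim=> [|q IH]; first by rewrite mul0n; case: e {H}; move=> a b; exact: rst_refl.
rewrite mulSn map_iterD; apply: same_hyp_trans H _.
exact: (same_map (good_phi k) IH).
Qed.

Lemma edge_iter n e : edge adj Y e -> edge adj Y (map_edge (iter n phi) e).
Proof. move=> He; exact: (edge_map (good_phi n) He). Qed.
Lemma edge_iter_psi n e : edge adj Y e -> edge adj Y (map_edge (iter n psi) e).
Proof. move=> He; exact: (edge_map (good_psi n) He). Qed.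

Lemma inv_near e k : edge adj Y e -> 0 < k -> same_hyp adj Y e (map_edge (iter k phi) e) ->
  exists B, forall y, Y y -> exists c, carrier adj Y e c /\ dist y c <= B.
Proof.
move=> He Hk Hinv.
have [B HB] := bound_nat2 s k.+1 (fun r v => dist (iter r phi v) e.1).
exists B => y Yy.
have [v [n [Hv [E|E]]]] := Hcoc Yy.
  have En := divn_eq n k.
  exists (map_edge (iter (n %/ k * k) phi) e).1; split.
    exists (map_edge (iter (n %/ k * k) phi) e); split; [exact: edge_iter | exact: inv_iter | by left].
  rewrite -E [in iter n phi v]En iterD /= (dist_map _ _ (good_phi _)).
  apply: HB => //; have := ltn_pmod n Hk; lia.
set Q := (n %/ k).+1 * k.
have HQ : n <= Q by rewrite /Q mulSn; have := divn_eq n k; have := ltn_pmod n Hk; lia.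
have HQk : Q - n <= k by rewrite /Q mulSn; have := divn_eq n k; have := ltn_pmod n Hk; lia.
exists (map_edge (iter Q psi) e).1; split.
  exists (map_edge (iter Q psi) e); split; [exact: edge_iter_psi | | by left].
  have := same_map (good_psi Q) (inv_iter Hinv (n %/ k).+1).
  by rewrite -/Q (map_edgeK (good_phi Q)) => /same_hyp_sym.
rewrite -(dist_map _ _ (good_phi Q)) /= (hg (good_phi Q)).
have -> : Q = (Q - n) + n by lia.
rewrite iterD E; apply: HB => //; lia.
Qed.

Definition Shal e n := forall x, halfspace adj Y e x -> exists c, carrier adj Y e c /\ dist x c <= n.

Lemma notdeep_of e n : Shal e n -> ~ deep adj Y e.
Proof.
move=> H Hd; have [x [Hx Hn]] := Hd n; have [c [Cc Hc]] := H x Hx.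
apply: (Hn c Cc); apply: distY_within => //; [by case: Hx | exact: carrierY Cc].
Qed.

Lemma shal_of_notdeep e : ~ deep adj Y e -> exists n, Shal e n.
Proof.
move=> Hd; apply: NNPP => Hn; apply: Hd => n; apply: NNPP => H1; apply: Hn; exists n => x Hx.
apply: NNPP => H2; apply: H1; exists x; split => // c Cc Hw; apply: H2; exists c; split => //.
exact: withinY_dist Hw.
Qed.

Lemma Shal_mono e n m : n <= m -> Shal e n -> Shal e m.
Proof. move=> Hnm H x /H [c [Cc Hc]]; exists c; split => //; lia. Qed.

Lemma carrier_orient b e x : edge adj Y e -> (carrier adj Y (orient b e) x <-> carrier adj Y e x).
Proof. by case: b => //= He; exact: carrier_swap. Qed.

Lemma inv_trivial e k : edge adj Y e -> 0 < k -> same_hyp adj Y e (map_edge (iter k phi) e) ->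
  trivial_hyp adj Y e.
Proof.
move=> He Hk Hinv; have [B HB] := inv_near He Hk Hinv.
have S : forall b, Shal (orient b e) B.
  move=> b x Hx; have [c [Cc Hc]] := HB x (let: conj h _ := Hx in h).
  by exists c; split => //; rewrite carrier_orient.
split; [exact: (notdeep_of (S true)) | exact: (notdeep_of (S false))].
Qed.

Lemma NI_of e : edge adj Y e -> ~ trivial_hyp adj Y e -> NI e.
Proof. move=> He Hn k Hk Hs; apply: Hn; exact: inv_trivial Hs. Qed.

Lemma trivial_inv e : edge adj Y e -> trivial_hyp adj Y e ->
  exists k, 0 < k /\ same_hyp adj Y e (map_edge (iter k phi) e).
Proof.
move=> He [H1 H2]; apply: NNPP => Hn.
have HN : NI e by move=> k Hk Hs; apply: Hn; exists k.
have [B HB] := NI_bounded HN.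
have [n1 S1] := shal_of_notdeep H1.
have [n2 S2] := shal_of_notdeep H2.
have Hall : forall y, Y y -> dist e.1 y <= B + (n1 + n2).
  move=> y Yy; case: (hs_sides He Yy) => [/S1|/S2] [c [Cc Hc]].
    have := HB c Cc; have := dist_tri e.1 c y; rewrite (distC c y); lia.
  move: Cc; rewrite carrier_swap // => Cc.
  have := HB c Cc; have := dist_tri e.1 c y; rewrite (distC c y); lia.
have [L HL] := ball e.1 (B + (n1 + n2)).
have Ye1 : Y e.1 by case: He.
have [M HM] := pigL (L := L) (P := fun _ => True) (R := fun j y => iter j phi e.1 = y)
  (fun j _ => ex_intro _ (iter j phi e.1) (conj (HL _ (Hall _ (gY (good_phi j) Ye1))) erefl))
  (fun n m y Hnm _ _ E1 E2 => orbit_NI HN Hnm (etrans E1 (esym E2))).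
have := HM M I; lia.
Qed.

Lemma rep_edge (Es : list (V * V)) :
  (forall v w, List.In v s -> adj v w -> List.In (v, w) Es) ->
  forall e, edge adj Y e -> exists f n, List.In f Es /\
    (e = map_edge (iter n phi) f \/ e = map_edge (iter n psi) f).
Proof.
move=> HEs [a b] [/= Ya Yb Hab].
have [v [n [Hv [E|E]]]] := Hcoc Ya.
  exists (v, iter n psi b), n; split; last first.
    by left; rewrite /map_edge /= E (hg (good_phi n)).
  apply: HEs => //.
  rewrite -[X in adj X _](gh (good_phi n) v) E; exact: (hA (good_phi n)).
exists (v, iter n phi b), n; split; last first.
  by right; rewrite /map_edge /= -E !(gh (good_phi n)).
apply: HEs => //; rewrite -E; exact: (gA (good_phi n)).
Qed.

Lemma rep_good (Es : list (V * V)) :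
  (forall v w, List.In v s -> adj v w -> List.In (v, w) Es) ->
  forall e, edge adj Y e -> exists f g h, [/\ List.In f Es, good g h & e = map_edge g f].
Proof.
move=> HEs e He; have [f [n [Hf [E|E]]]] := rep_edge HEs He.
  by exists f, (iter n phi), (iter n psi); split => //; exact: good_phi.
by exists f, (iter n psi), (iter n phi); split => //; exact: good_psi.
Qed.

Definition Dbound D := forall e, edge adj Y e -> ~ trivial_hyp adj Y e ->
  forall z w, carrier adj Y e z -> carrier adj Y e w -> dist z w <= D.

Lemma part1_int : exists D, Dbound D.
Proof.
have [Es HEs] := Es_ex.
have Hper : forall f, exists D, forall D', D <= D' -> NI f ->
   forall z w, carrier adj Y f z -> carrier adj Y f w -> dist z w <= D'.
  move=> f; case: (classic (NI f)) => [HN|HN]; last by exists 0 => B' _ /HN.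
  have [B HB] := NI_bounded HN.
  exists (B + B) => B' HB' _ z w Cz Cw.
  have := HB z Cz; have := HB w Cw; have := dist_tri z f.1 w; rewrite (distC z f.1); lia.
have [D0 HD0] := @bound_list2 _ Es _ Hper.
exists D0 => e He Hn z w Cz Cw.
have [f [g [h [Hf Hg Ee]]]] := rep_good HEs He.
have HNf : NI f by apply: (NI_transfer Hg); rewrite -Ee; exact: NI_of.
rewrite Ee in Cz Cw.
rewrite -(dist_map _ _ (good_sym Hg)).
apply: (HD0 D0 (leqnn _) f Hf HNf); exact: (carrier_map_inv Hg).
Qed.

Lemma Shal_map g h e n : good g h -> Shal e n -> Shal (map_edge g e) n.
Proof.
move=> Hg H x Hx; have [c [Cc Hc]] := H _ (halfspace_map_inv Hg Hx).
exists (g c); split; first exact: (carrier_map Hg).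
by rewrite -{1}[x](hg Hg) (dist_map _ _ Hg).
Qed.

Lemma Shal_map_inv g h e n : good g h -> Shal (map_edge g e) n -> Shal e n.
Proof. move=> Hg /(Shal_map (good_sym Hg)); by rewrite (map_edgeK Hg). Qed.

Lemma part2_int D : Dbound D -> exists K, forall e, edge adj Y e -> half_essential adj Y e ->
  forall b, ~ deep adj Y (orient b e) ->
  forall x y, halfspace adj Y (orient b e) x -> halfspace adj Y (orient b e) y -> dist x y <= K.
Proof.
move=> HD; have [Es HEs] := Es_ex.
have Hper : forall f, exists N, forall N', N <= N' -> forall b,
   (exists n, Shal (orient b f) n) -> Shal (orient b f) N'.
  move=> f.
  have H : forall b, exists N, forall N', N <= N' ->
     (exists n, Shal (orient b f) n) -> Shal (orient b f) N'.
    move=> b; case: (classic (exists n, Shal (orient b f) n)) => [[n Hn]|Hno].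
      by exists n => N' HN' _; exact: Shal_mono Hn.
    by exists 0 => N' _ /Hno.
  have [Nt Ht] := H true; have [Nf Hf] := H false.
  exists (maxn Nt Nf) => N' HN' [] Hex; [apply: Ht | apply: Hf] => //; lia.
have [N HN] := @bound_list2 _ Es _ Hper.
exists (N + D + N) => e He Hhe b Hb x y Hx Hy.
have Hnt : ~ trivial_hyp adj Y e by case: Hhe => -[h1 h2] [h3 h4].
have [n0 Hn0] := shal_of_notdeep Hb.
have [f [g [h [Hf Hg Ee]]]] := rep_good HEs He.
have Sf : Shal (orient b f) N.
  apply: (HN N (leqnn _) f Hf b); exists n0.
  apply: (Shal_map_inv Hg); by rewrite map_orient -Ee.
have Se : Shal (orient b e) N by rewrite Ee -map_orient; exact: (Shal_map Hg Sf).
have [cx [Cx Hcx]] := Se x Hx; have [cy [Cy Hcy]] := Se y Hy.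
rewrite carrier_orient // in Cx; rewrite carrier_orient // in Cy.
have := HD e He Hnt cx cy Cx Cy; have := dist_tri x cx y; have := dist_tri cx cy y.
rewrite (distC cy y); lia.
Qed.

Lemma carrier_first e : edge adj Y e -> carrier adj Y e e.1.
Proof. by move=> He; exists e; split => //; [exact: rst_refl | left]. Qed.

Lemma part3_int D : Dbound D -> exists d, forall d', d <= d' -> forall e, edge adj Y e ->
  essential adj Y e ->
  [/\ ~ same_hyp adj Y e (map_edge (iter d' phi) e),
      ~ crosses adj Y e (map_edge (iter d' phi) e)
    & forall e', edge adj Y e' -> crosses adj Y e' e ->
        crosses adj Y e' (map_edge (iter d' phi) e) -> trivial_hyp adj Y e'].
Proof.
move=> HD; have [Es HEs] := Es_ex.
have Hper : forall f, exists d, forall d', d <= d' -> NI f ->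
    forall d'', d' <= d'' -> 3 * D < dist f.1 (iter d'' phi f.1).
  move=> f; case: (classic (NI f)) => [HNf|HNf]; last by exists 0 => ? _ /HNf.
  have [L HL] := ball f.1 (3 * D).
  have [M HM] := pigL (L := L) (P := fun n => dist f.1 (iter n phi f.1) <= 3 * D)
    (R := fun n y => iter n phi f.1 = y)
    (fun n Hn => ex_intro _ (iter n phi f.1) (conj (HL _ Hn) erefl))
    (fun n m y Hnm _ _ E1 E2 => orbit_NI HNf Hnm (etrans E1 (esym E2))).
  exists M => d' Hd' _ d'' Hd''.
  case: (ltnP (3 * D) (dist f.1 (iter d'' phi f.1))) => // Hle.
  have := HM _ Hle; lia.
have [d Hd] := @bound_list2 _ Es _ Hper.
exists d => d' Hdd' e He Hess.
have Hnt : ~ trivial_hyp adj Y e by case: Hess => h1 h2 [].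
have HNe := NI_of He Hnt.
have [f [g [h [Hf Hg Ee]]]] := rep_good HEs He.
have HNf : NI f by apply: (NI_transfer Hg); rewrite -Ee.
have Hfar : 3 * D < dist e.1 (iter d' phi e.1).
  rewrite Ee /= -(good_iterC _ _ Hg) (dist_map _ _ Hg).
  exact: (Hd d (leqnn _) f Hf HNf d' Hdd').
set E' := map_edge (iter d' phi) e.
have HE' : edge adj Y E' by exact: edge_iter.
have Ce1 := carrier_first He.
have Cinv : forall q, carrier adj Y E' q -> dist q (iter d' phi e.1) <= D.
  move=> q Cq; have Cq' := carrier_map_inv (good_phi d') Cq.
  rewrite -{1}[q](hg (good_phi d')) (dist_map _ _ (good_phi d')).
  exact: HD He Hnt _ _ Cq' Ce1.
split.
- move=> Hs.
  have C : carrier adj Y e (iter d' phi e.1).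
    by exists E'; split => //; left.
  have := HD e He Hnt _ _ Ce1 C; lia.
- move=> Hc; have [p [Cp Cp']] := cross_meet He HE' Hc.
  have := HD e He Hnt _ _ Ce1 Cp; have := Cinv p Cp'.
  have := dist_tri e.1 p (iter d' phi e.1); lia.
- move=> e' He' Hc1 Hc2; apply: NNPP => Hnt'.
  have [p [Cp Cp']] := cross_meet He' He Hc1.
  have [q [Cq Cq']] := cross_meet He' HE' Hc2.
  have := HD e' He' Hnt' _ _ Cp Cq; have := HD e He Hnt _ _ Ce1 Cp'; have := Cinv q Cq'.
  have := dist_tri e.1 p (iter d' phi e.1); have := dist_tri p q (iter d' phi e.1); lia.
Qed.

Lemma list_comb (A B : Type) (L : list A) (Q : A -> list B -> Prop) :
  (forall x, exists l, Q x l) ->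
  (forall x l l', (forall y, List.In y l -> List.In y l') -> Q x l -> Q x l') ->
  exists l, forall x, List.In x L -> Q x l.
Proof.
move=> H Hm; elim: L => [|a L [l Hl]]; first by exists nil.
have [la Ha] := H a; exists (la ++ l) => x [<-|Hx].
  by apply: Hm Ha => y Hy; apply: List.in_or_app; left.
by apply: Hm (Hl x Hx) => y Hy; apply: List.in_or_app; right.
Qed.

Lemma part4_int : exists s' : list (V * V), forall e, edge adj Y e -> trivial_hyp adj Y e ->
  exists e0, List.In e0 s' /\ same_hyp adj Y e e0.
Proof.
have [Es HEs] := Es_ex.
have Hper : forall f, exists l : list (V * V),
    (exists k, 0 < k /\ same_hyp adj Y f (map_edge (iter k phi) f)) ->
    forall j, exists e0, List.In e0 l /\ same_hyp adj Y (map_edge (iter j phi) f) e0.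
  move=> f; case: (classic (exists k, 0 < k /\ same_hyp adj Y f (map_edge (iter k phi) f)))
    => [[k [Hk Hinv]]|Hno]; last by exists nil => /Hno.
  exists (List.map (fun r => map_edge (iter r phi) f) (List.seq 0 k)) => _ j.
  exists (map_edge (iter (j %% k) phi) f); split.
    apply: List.in_map; apply/List.in_seq; have := ltn_pmod j Hk; lia.
  rewrite [in iter j]((divn_eq j k)) addnC map_iterD.
  apply: same_hyp_sym; apply: (same_map (good_phi _)); exact: inv_iter.
have [l Hl] := @list_comb _ _ Es _ Hper
  (fun x l l' Hsub Hq Hex j => let: ex_intro e0 (conj h1 h2) := Hq Hex j in
     ex_intro _ e0 (conj (Hsub _ h1) h2)).
exists l => e He Htr.
have [k [Hk Hinv]] := trivial_inv He Htr.
have [f [n [Hf [E|E]]]] := rep_edge HEs He.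
  have Ef : f = map_edge (iter n psi) e by rewrite E (map_edgeK (good_phi n)).
  have Hinvf : same_hyp adj Y f (map_edge (iter k phi) f).
    by rewrite Ef; exact: (inv_transfer (good_psi n) Hinv).
  have [e0 [H0 S0]] := Hl f Hf (ex_intro _ k (conj Hk Hinvf)) n.
  by exists e0; rewrite E.
have Ef : f = map_edge (iter n phi) e by rewrite E (map_edgeK (good_psi n)).
have Hinvf : same_hyp adj Y f (map_edge (iter k phi) f).
  by rewrite Ef; exact: (inv_transfer (good_phi n) Hinv).
have [e0 [H0 S0]] := Hl f Hf (ex_intro _ k (conj Hk Hinvf)) (n * k - n).
exists e0; split => //; apply: same_hyp_trans S0.
have S1 := same_map (good_psi n) (inv_iter Hinvf n).
rewrite -E in S1; apply: same_hyp_trans S1 _.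
have Hnk : n <= n * k by rewrite leq_pmulr.
set j := n * k - n; have Enk : n * k = n + j by rewrite /j; lia.
rewrite Enk map_iterD (map_edgeK (good_phi n)); exact: rst_refl.
Qed.

Lemma main_sec :
  [/\ (exists D : nat, forall D', D <= D' -> forall e, edge adj Y e ->
         ~ trivial_hyp adj Y e -> diam_le adj Y (carrier adj Y e) D'),
      (exists K : nat, forall K', K <= K' -> forall e, edge adj Y e ->
         half_essential adj Y e -> forall b : bool,
         ~ deep adj Y (orient b e) ->
         diam_le adj Y (halfspace adj Y (orient b e)) K'),
      (exists d : nat, forall d', d <= d' -> forall e, edge adj Y e ->
         essential adj Y e ->
         [/\ ~ same_hyp adj Y e (map_edge (iter d' phi) e),
             ~ crosses adj Y e (map_edge (iter d' phi) e)
           & forall e', edge adj Y e' -> crosses adj Y e' e ->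
               crosses adj Y e' (map_edge (iter d' phi) e) ->
               trivial_hyp adj Y e'])
    & (exists s : list (V * V), forall e, edge adj Y e -> trivial_hyp adj Y e ->
         exists e0, List.In e0 s /\ same_hyp adj Y e e0)].
Proof.
have [D HD] := part1_int.
split.
- exists D => D' HD' e He Hnt x y Cx Cy.
  apply: distY_within; [exact: carrierY Cx | exact: carrierY Cy |].
  have := HD e He Hnt x y Cx Cy; lia.
- have [K HK] := part2_int HD; exists K => K' HK' e He Hhe b Hb x y Hx Hy.
  apply: distY_within; [by case: Hx | by case: Hy |].
  have := HK e He Hhe b Hb x y Hx Hy; lia.
- exact: part3_int HD.
- exact: part4_int.
Qed.

End Dist.



Theorem lemma5p6 (V : Type) (adj : V -> V -> Prop)
    (Gamma : (V -> V) -> Prop) (Y : V -> Prop) (phi : V -> V) :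
  median_graph adj -> locally_finite adj -> deck_group adj Gamma ->
  quasiline adj Gamma Y phi ->
  [/\ (exists D : nat, forall D', D <= D' -> forall e, edge adj Y e ->
         ~ trivial_hyp adj Y e -> diam_le adj Y (carrier adj Y e) D'),
      (exists K : nat, forall K', K <= K' -> forall e, edge adj Y e ->
         half_essential adj Y e -> forall b : bool,
         ~ deep adj Y (orient b e) ->
         diam_le adj Y (halfspace adj Y (orient b e)) K'),
      (exists d : nat, forall d', d <= d' -> forall e, edge adj Y e ->
         essential adj Y e ->
         [/\ ~ same_hyp adj Y e (map_edge (iter d' phi) e),
             ~ crosses adj Y e (map_edge (iter d' phi) e)
           & forall e', edge adj Y e' -> crosses adj Y e' e ->
               crosses adj Y e' (map_edge (iter d' phi) e) ->
               trivial_hyp adj Y e'])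
    & (exists s : list (V * V), forall e, edge adj Y e -> trivial_hyp adj Y e ->
         exists e0, List.In e0 s /\ same_hyp adj Y e e0)].
Proof.
move=> [Hsym Hirr Hconn Hmed] Hlf [[Haut HGid] Hcomp _ Hfree0 _]
  [Hconv HGphi _ [HYphi Hsurj] [s [HsY Hcoc]]].
have [[psi Hpp Hpp'] HphiA] := Haut phi HGphi.
have HYpsi : forall y, Y y -> Y (psi y).
  by move=> y /Hsurj [y' [Yy' <-]]; rewrite Hpp.
have HGit : forall k, Gamma (iter k phi).
  elim=> [|k IH]; first exact: HGid.
  exact: (Hcomp phi (iter k phi) HGphi IH).
have Hfree : forall k c, iter k phi c = c -> forall x, iter k phi x = x.
  move=> k c Hc x; apply: NNPP => Hx.
  pose f0 := fun _ : {ffun 'I_0 -> bool} => c.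
  apply: (Hfree0 (iter k phi) (HGit k) (ex_intro _ x Hx) 0 f0).
    split.
      by move=> a b _; apply/ffunP => -[i Hi].
    move=> a b; have -> : #|[pred i | a i != b i]| = 0 by apply: eq_card0 => -[i Hi].
    by split => // /Hirr.
  by move=> a; exists a; rewrite /f0 Hc.
exact: (main_sec Hsym Hirr Hconn Hmed Hconv Hpp Hpp' HphiA HYphi HYpsi Hcoc Hlf Hfree).
Qed.
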